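(* Let $S$ be a dense subsemigroup of $((0,\infty),+)$ and let $\mathcal{K}=\{A\subseteq S: S\setminus A\text{ is not a } J\text{-set near zero}\}$. Then $\mathcal{K}$ is a filter on $S$, $J_0(S)=\overline{\mathcal{K}}$, and $J_0(S)$ is a compact subsemigroup of $\beta S$.
   Context: ''Dense'' means dense in the usual topology of $(0,\infty)$. $\beta S$ is the Stone–Čech compactification of the discrete set $S$ (ultrafilters on $S$), with $+$ extended so that $(\beta S,+)$ is a compact right topological semigroup: $A\in p+q$ iff $\{x\in S:-x+A\in q\}\in p$. $O^{+}(S)=\{p\in\beta S: S\cap(0,\epsilon)\in p\text{ for every }\epsilon>0\}$. For a filter $\mathcal{K}$ on $S$, $\overline{\mathcal{K}}=\{p\in\beta S:\mathcal{K}\subseteq p\}$. Let $\tau_0$ be the set of sequences $f:\mathbb{N}\to S$ with $f(n)\to0$. A set $A\subseteq S$ is a $J$-set near zero iff for every finite nonempty $F\subseteq\tau_0$ and every $\delta>0$ there exist $a\in S\cap(0,\delta)$ and a finite nonempty $H\subseteq\mathbb{N}$ such that $a+\sum_{t\in H}f(t)\in A$ for every $f\in F$. $J_0(S)=\{p\in O^{+}(S): \text{every } A\in p \text{ is a } J\text{-set near zero}\}$. *)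

(* Defs.v *)
From Stdlib Require Import Reals List.
Open Scope R_scope.

(* Subsets of R are predicates R -> Prop; subsets of S are predicates contained in S. *)
Definition subsetR (A B : R -> Prop) : Prop := forall x, A x -> B x.

Definition dense_subsemigroup (S : R -> Prop) : Prop :=
  (forall x, S x -> 0 < x) /\
  (forall x y, S x -> S y -> S (x + y)) /\
  (forall a b, 0 < a -> a < b -> exists s, S s /\ a < s /\ s < b).

(* Points of beta S: ultrafilters on S, i.e. families p of subsets of S. *)
Definition ultrafilter (S : R -> Prop) (p : (R -> Prop) -> Prop) : Prop :=
  (forall A, p A -> subsetR A S) /\
  p S /\
  ~ p (fun _ => False) /\
  (forall A B, p A -> p B -> p (fun x => A x /\ B x)) /\
  (forall A B, p A -> subsetR A B -> subsetR B S -> p B) /\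
  (forall A, subsetR A S -> p A \/ p (fun x => S x /\ ~ A x)).

Definition filter_on (S : R -> Prop) (K : (R -> Prop) -> Prop) : Prop :=
  (forall A, K A -> subsetR A S) /\
  K S /\
  ~ K (fun _ => False) /\
  (forall A B, K A -> K B -> K (fun x => A x /\ B x)) /\
  (forall A B, K A -> subsetR A B -> subsetR B S -> K B).

(* The extended operation on beta S:  A in p+q  iff  {x in S : -x+A in q} in p,
   where -x+A = {y in S : x+y in A}. *)
Definition ult_add (S : R -> Prop) (p q : (R -> Prop) -> Prop) : (R -> Prop) -> Prop :=
  fun A => subsetR A S /\
    p (fun x => S x /\ q (fun y => S y /\ A (x + y))).

Definition Oplus (S : R -> Prop) (p : (R -> Prop) -> Prop) : Prop :=
  ultrafilter S p /\ forall eps, 0 < eps -> p (fun x => S x /\ x < eps).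

(* tau_0: sequences in S converging to 0 (indexed by nat; the shift from N={1,2,..} is immaterial). *)
Definition tau0 (S : R -> Prop) (f : nat -> R) : Prop :=
  (forall n, S (f n)) /\ Un_cv f 0.

(* sum_{t in H} f(t) for a finite set H given as a duplicate-free list *)
Definition sum_over (f : nat -> R) (H : list nat) : R :=
  fold_right (fun t acc => f t + acc) 0 H.

Definition Jset_near_zero (S : R -> Prop) (A : R -> Prop) : Prop :=
  forall F : list (nat -> R), F <> nil -> (forall f, In f F -> tau0 S f) ->
  forall delta, 0 < delta ->
  exists a (H : list nat),
    S a /\ a < delta /\ H <> nil /\ NoDup H /\
    forall f, In f F -> A (a + sum_over f H).

Definition J0 (S : R -> Prop) (p : (R -> Prop) -> Prop) : Prop :=
  Oplus S p /\ forall A, p A -> Jset_near_zero S A.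

Definition Kfam (S : R -> Prop) : (R -> Prop) -> Prop :=
  fun A => subsetR A S /\ ~ Jset_near_zero S (fun x => S x /\ ~ A x).

(* closure  K-bar = {p in beta S : K subset p} *)
Definition Kbar (S : R -> Prop) (K : (R -> Prop) -> Prop) (p : (R -> Prop) -> Prop) : Prop :=
  ultrafilter S p /\ forall A, K A -> p A.

Definition bS_open (S : R -> Prop) (U : ((R -> Prop) -> Prop) -> Prop) : Prop :=
  forall p, U p -> exists A, p A /\ forall q, ultrafilter S q -> q A -> U q.

Definition bS_compact (S : R -> Prop) (X : ((R -> Prop) -> Prop) -> Prop) : Prop :=
  forall (I : Type) (U : I -> ((R -> Prop) -> Prop) -> Prop),
    (forall i, bS_open S (U i)) ->
    (forall p, X p -> exists i, U i p) ->
    exists l : list I, forall p, X p -> exists i, In i l /\ U i p.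

Definition bS_subsemigroup (S : R -> Prop) (X : ((R -> Prop) -> Prop) -> Prop) : Prop :=
  (forall p, X p -> ultrafilter S p) /\
  (exists p, X p) /\
  (forall p q, X p -> X q -> X (ult_add S p q)).

(* Main.v *)
Require Import Defs.
From Stdlib Require Import List Lia Classical Arith PeanoNat Permutation.
Import ListNotations.
Local Open Scope nat_scope.

Fixpoint words (k n : nat) : list (list nat) :=
  match n with
  | 0 => [[]]
  | S n => flat_map (fun w => map (fun a => a :: w) (seq 0 k)) (words k n)
  end.

Lemma words_spec k n w : length w = n -> (forall a, In a w -> a < k) -> In w (words k n).
Proof.
  revert w; induction n as [|n IH]; intros w Hl Ha.
  - destruct w; simpl in *; [auto|discriminate].
  - destruct w as [|b w]; simpl in *; [discriminate|].
    apply in_flat_map. exists w. split.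
    + apply IH; auto.
    + apply (in_map (fun a => a :: w)). apply in_seq. specialize (Ha b (or_introl eq_refl)). lia.
Qed.

Lemma words_spec2 k n w : In w (words k n) -> length w = n /\ (forall a, In a w -> a < k).
Proof.
  revert w; induction n as [|n IH]; intros w Hw; simpl in Hw.
  - destruct Hw as [<-|[]]. simpl; split; [auto|intros a []].
  - apply in_flat_map in Hw. destruct Hw as [w' [Hw' Hm]].
    apply in_map_iff in Hm. destruct Hm as [b [<- Hb]].
    apply in_seq in Hb. destruct (IH _ Hw') as [H1 H2]. simpl. split; [lia|].
    intros a [<-|Ha]; [lia|auto].
Qed.

Fixpoint tuples {X : Type} (cols : list X) (m : nat) : list (list X) :=
  match m with
  | 0 => [[]]
  | S m => flat_map (fun l => map (fun x => x :: l) cols) (tuples cols m)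
  end.

Lemma tuples_spec {X} (cols : list X) m l :
  length l = m -> (forall x, In x l -> In x cols) -> In l (tuples cols m).
Proof.
  revert l; induction m as [|m IH]; intros l Hl Ha.
  - destruct l; simpl in *; [auto|discriminate].
  - destruct l as [|b l]; simpl in *; [discriminate|].
    apply in_flat_map. exists l. split.
    + apply IH; auto.
    + apply (in_map (fun x => x :: l)). auto.
Qed.

Definition sub (t : list (option nat)) (j : nat) : list nat :=
  map (fun o => match o with None => j | Some a => a end) t.

Lemma sub_app t1 t2 j : sub (t1 ++ t2) j = sub t1 j ++ sub t2 j.
Proof. unfold sub; apply map_app. Qed.

Lemma sub_Some l j : sub (map Some l) j = l.
Proof. unfold sub; rewrite map_map; induction l; simpl; congruence. Qed.

Lemma sub_length t j : length (sub t j) = length t.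
Proof. unfold sub; apply length_map. Qed.

Definition isline (k N : nat) (t : list (option nat)) : Prop :=
  length t = N /\ In None t /\ forall a, In (Some a) t -> a < k.

Lemma sub_letters k t j : (forall a, In (Some a) t -> a < k) -> j < k ->
  forall a, In a (sub t j) -> a < k.
Proof.
  intros Ht Hj a Ha. unfold sub in Ha. apply in_map_iff in Ha.
  destruct Ha as [[b|] [<- Hb]]; auto.
Qed.

Lemma sub_words k N t j : isline k N t -> j < k -> In (sub t j) (words k N).
Proof.
  intros [H1 [_ H3]] Hj. apply words_spec.
  - rewrite sub_length; auto.
  - apply sub_letters; auto.
Qed.

Definition colored {X} (k N : nat) (c : list nat -> X) (cols : list X) : Prop :=
  forall w, length w = N -> (forall a, In a w -> a < k) -> In (c w) cols.

Definition HJ (k : nat) : Prop :=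
  forall (X : Type) (cols : list X), exists N, forall c : list nat -> X,
    colored k N c cols ->
    exists t, isline k N t /\ forall i j, i < k -> j < k -> c (sub t i) = c (sub t j).

Definition Pfoc (k : nat) (X : Type) (cols : list X) (s : nat) : Prop :=
  exists N, forall c : list nat -> X, colored (S k) N c cols ->
  (exists t, isline (S k) N t /\ forall j, j < S k -> c (sub t j) = c (sub t 0))
  \/ (exists ls f, length ls = s /\ length f = N /\ (forall a, In a f -> a < S k) /\
      (forall t, In t ls -> isline (S k) N t /\ sub t k = f /\
                  forall j, j < k -> c (sub t j) = c (sub t 0)) /\
      NoDup (map (fun t => c (sub t 0)) ls)).

Lemma map_eq_in {A B} (f g : A -> B) l x : map f l = map g l -> In x l -> f x = g x.
Proof.
  induction l as [|y l IH]; simpl; intros H Hx; [destruct Hx|].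
  injection H; intros H1 H2. destruct Hx as [<-|Hx]; auto.
Qed.

Lemma Pfoc_step k X cols s : 1 <= k -> HJ k -> Pfoc k X cols s -> Pfoc k X cols (S s).
Proof.
  intros hk HJk [N HN].
  destruct (HJk (list X) (tuples cols (length (words (S k) N)))) as [M HM].
  exists (N + M). intros c Hc.
  set (C := fun v => map (fun u => c (u ++ v)) (words (S k) N)).
  destruct (HM C) as [lam [Hlam Heq]].
  { intros v Hv Hva. unfold C. apply tuples_spec.
    - apply length_map.
    - intros x Hx. apply in_map_iff in Hx. destruct Hx as [u [<- Hu]].
      apply words_spec2 in Hu. destruct Hu as [Hu1 Hu2]. apply Hc.
      + rewrite length_app; lia.
      + intros a Ha. apply in_app_or in Ha. destruct Ha as [Ha|Ha]; auto.
        specialize (Hva a Ha); lia. }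
  assert (Hmv : forall u i j, In u (words (S k) N) -> i < k -> j < k ->
            c (u ++ sub lam i) = c (u ++ sub lam j)).
  { intros u i j Hu Hi Hj. specialize (Heq i j Hi Hj). unfold C in Heq.
    exact (map_eq_in _ _ _ _ Heq Hu). }
  destruct Hlam as [Hl1 [Hl2 Hl3]].
  set (c' := fun u => c (u ++ sub lam 0)).
  assert (Hc' : colored (S k) N c' cols).
  { intros w Hw Hwa. unfold c'. apply Hc.
    - rewrite length_app, sub_length; lia.
    - intros a Ha. apply in_app_or in Ha. destruct Ha as [Ha|Ha]; auto.
      assert (a < k) by (apply (sub_letters k lam 0); auto; lia). lia. }
  assert (Lift : forall t, isline (S k) N t -> (forall j, j < S k -> c' (sub t j) = c' (sub t 0)) ->
     exists t, isline (S k) (N + M) t /\ forall j, j < S k -> c (sub t j) = c (sub t 0)).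
  { intros t [Ht1 [Ht2 Ht3]] Hmono. exists (t ++ map Some (sub lam 0)). split.
    - split; [rewrite length_app, length_map, sub_length; lia|].
      split; [apply in_or_app; auto|].
      intros a Ha. apply in_app_or in Ha. destruct Ha as [Ha|Ha]; auto.
      apply in_map_iff in Ha. destruct Ha as [b [Hb Hb']]. injection Hb; intros <-.
      assert (b < k) by (apply (sub_letters k lam 0); auto; lia). lia.
    - intros j Hj. rewrite !sub_app, !sub_Some. apply Hmono; auto. }
  destruct (HN c' Hc') as [[t [Ht Hmono]]|[ls [f [Hls [Hf1 [Hf2 [Hlines Hnd]]]]]]].
  - left. apply (Lift t); auto.
  - destruct (classic (exists t, In t ls /\ c' (sub t 0) = c' f)) as [[t [Ht Htf]]|Hno].
    + left. destruct (Hlines t Ht) as [Hti [Htk Htj]]. apply (Lift t Hti).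
      intros j Hj. destruct (Nat.eq_dec j k) as [->|Hjk].
      * rewrite Htk; auto.
      * apply Htj; lia.
    + right. exists (map (fun t => t ++ lam) ls ++ [map Some f ++ lam]).
      exists (f ++ sub lam k).
      assert (Hfw : In f (words (S k) N)) by (apply words_spec; auto).
      split; [rewrite length_app, length_map; simpl; lia|].
      split; [rewrite length_app, sub_length; lia|].
      split.
      { intros a Ha. apply in_app_or in Ha. destruct Ha as [Ha|Ha]; auto.
        unfold sub in Ha. apply in_map_iff in Ha. destruct Ha as [[b|] [<- Hb]]; [|lia].
        specialize (Hl3 b Hb). lia. }
      split.
      { intros t' Ht'. apply in_app_or in Ht'. destruct Ht' as [Ht'|Ht'].
        - apply in_map_iff in Ht'. destruct Ht' as [t [<- Ht]].
          destruct (Hlines t Ht) as [[Ht1 [Ht2 Ht3]] [Htk Htj]].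
          split; [split; [rewrite length_app; lia|split]|].
          + apply in_or_app; auto.
          + intros a Ha. apply in_app_or in Ha. destruct Ha as [Ha|Ha]; auto.
            specialize (Hl3 a Ha); lia.
          + rewrite sub_app, Htk. split; auto.
            intros j Hj. rewrite !sub_app.
            rewrite (Hmv (sub t j) j 0); [|apply sub_words; [split; auto|lia]|lia|lia].
            apply Htj; auto.
        - destruct Ht' as [<-|[]].
          split; [split; [rewrite length_app, length_map; lia|split]|].
          + apply in_or_app; auto.
          + intros a Ha. apply in_app_or in Ha. destruct Ha as [Ha|Ha].
            * apply in_map_iff in Ha. destruct Ha as [b [Hb Hb']]. injection Hb; intros ->. auto.
            * specialize (Hl3 a Ha); lia.
          + rewrite sub_app, sub_Some. split; auto.
            intros j Hj. rewrite !sub_app, !sub_Some. apply Hmv; auto; lia. }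
      rewrite map_app, map_map. simpl.
      assert (Hm : map (fun x => c (sub (x ++ lam) 0)) ls = map (fun t => c' (sub t 0)) ls).
      { apply map_ext. intros t. rewrite sub_app. reflexivity. }
      rewrite Hm, sub_app, sub_Some.
      apply (Permutation_NoDup (Permutation_cons_append _ _)).
      constructor; auto.
      intros Hin. apply in_map_iff in Hin. destruct Hin as [t [Ht1 Ht2]].
      apply Hno. exists t. split; auto.
Qed.

Lemma Pfoc_all k X cols s : 1 <= k -> HJ k -> Pfoc k X cols s.
Proof.
  intros hk HJk. induction s as [|s IH].
  - exists 0. intros c _. right. exists [], []. simpl.
    split; [auto|split; [auto|split; [intros a []|split; [intros t0 []|constructor]]]].
  - apply Pfoc_step; auto.
Qed.

Lemma HJ_step k : 1 <= k -> HJ k -> HJ (S k).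
Proof.
  intros hk HJk X cols.
  destruct (Pfoc_all k X cols (S (length cols)) hk HJk) as [N HN].
  exists N. intros c Hc.
  destruct (HN c Hc) as [[t [Ht Hmono]]|[ls [f [Hls [_ [_ [Hlines Hnd]]]]]]].
  - exists t. split; auto. intros i j Hi Hj. rewrite (Hmono i Hi), (Hmono j Hj). auto.
  - exfalso.
    assert (Hincl : incl (map (fun t => c (sub t 0)) ls) cols).
    { intros x Hx. apply in_map_iff in Hx. destruct Hx as [t [<- Ht]].
      destruct (Hlines t Ht) as [Hti _].
      destruct (words_spec2 _ _ _ (sub_words (S k) N t 0 Hti ltac:(lia))) as [H1 H2].
      apply Hc; auto. }
    pose proof (NoDup_incl_length Hnd Hincl) as Hle.
    rewrite length_map in Hle. lia.
Qed.

Lemma HJ_1 : HJ 1.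
Proof.
  intros X cols. exists 1. intros c _. exists [None]. split.
  - split; [auto|split; [left; auto|]]. intros a [H|[]]; discriminate.
  - intros i j Hi Hj. assert (i = 0) by lia. assert (j = 0) by lia. subst; auto.
Qed.

Theorem HJ_all k : 1 <= k -> HJ k.
Proof.
  induction k as [|k IH]; intros hk; [lia|].
  destruct k as [|k]; [apply HJ_1|]. apply HJ_step; [lia|]. apply IH; lia.
Qed.

From Stdlib Require Import Reals Lra ClassicalEpsilon.
From mathcomp Require all_boot classical_sets filter boolp.
Open Scope R_scope.
Module UFM.
Import all_boot classical_sets filter boolp.

Lemma uf_extend (S : R -> Prop) (G : (R -> Prop) -> Prop) :
  Defs.filter_on S G -> exists p, Defs.ultrafilter S p /\ forall D, G D -> p D.
Proof.
move=> [GS [GSS [G0 [GI GU]]]].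
pose F' := fun B : R -> Prop => exists A, G A /\ forall x, A x -> B x.
have PF : ProperFilter F'.
  split.
  - by move=> [A [GA HA]]; apply: G0; apply: (GU A) => // x /HA.
  - split.
    + by exists S; split.
    + move=> A B [A1 [GA1 HA1]] [B1 [GB1 HB1]]; exists (fun x => A1 x /\ B1 x).
      split; first by apply: GI.
      by move=> x [/HA1 ? /HB1 ?]; split.
    + by move=> P Q PQ [A [GA HA]]; exists A; split=> // x /HA /PQ.
have [U [UU FU]] := ultraFilterLemma PF.
have UF : Filter U by case: UU => [[]].
have U0 : ~ U set0 by case: UU => [[]].
exists (fun A => subsetR A S /\ U A); split; last first.
  by move=> D GD; split; [exact: GS|apply: FU; exists D].
split; first by move=> A [].
split; first by split=> //; apply: FU; exists S.
split; first by move=> [_]; apply: U0.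
split.
  move=> A B [AS UA] [BS UB]; split; first by move=> x [/AS].
  exact: (@filterI _ _ UF _ _ UA UB).
split.
  move=> A B [AS UA] AB BS; split=> //; exact: (@filterS _ _ UF _ _ AB UA).
move=> A AS; case: (@in_ultra_setVsetC _ U A UU) => H; [left|right]; split=> //.
  by move=> x [].
have US : U S by apply: FU; exists S.
apply: (@filterS _ _ UF (S `&` ~` A)); first by move=> x [].
exact: (@filterI _ _ UF _ _ US H).
Qed.
End UFM.

Lemma sum_over_app f l1 l2 : sum_over f (l1 ++ l2) = sum_over f l1 + sum_over f l2.
Proof. induction l1; simpl; [ring|rewrite IHl1; ring]. Qed.

Lemma sum_over_ext f g l : (forall n, f n = g n) -> sum_over f l = sum_over g l.
Proof. intros H; induction l; simpl; [auto|rewrite H, IHl; auto]. Qed.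

Lemma sum_over_plus f g l : sum_over (fun n => f n + g n) l = sum_over f l + sum_over g l.
Proof. induction l; simpl; [ring|rewrite IHl; ring]. Qed.

Lemma sum_over_scal K f l : sum_over (fun n => K * f n) l = K * sum_over f l.
Proof. induction l; simpl; [ring|rewrite IHl; ring]. Qed.

Lemma sum_over_le f g l : (forall n, In n l -> f n <= g n) -> sum_over f l <= sum_over g l.
Proof.
  induction l; simpl; intros H; [lra|].
  assert (f a <= g a) by auto. assert (sum_over f l <= sum_over g l) by auto. lra.
Qed.

Lemma sum_over_nonneg f l : (forall n, 0 <= f n) -> 0 <= sum_over f l.
Proof. intros H; induction l; simpl; [lra|]. specialize (H a); lra. Qed.

Lemma sum_over_flat_map f (g : nat -> list nat) l :
  sum_over f (flat_map g l) = sum_over (fun n => sum_over f (g n)) l.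
Proof. induction l; simpl; [auto|rewrite sum_over_app, IHl; auto]. Qed.

Lemma sum_over_Sg (Sg : R -> Prop) (HS : forall x y, Sg x -> Sg y -> Sg (x + y)) g l x :
  Sg x -> (forall n, In n l -> Sg (g n)) -> Sg (x + sum_over g l).
Proof.
  revert x; induction l as [|a l IH]; simpl; intros x Hx Hg.
  - rewrite Rplus_0_r; auto.
  - replace (x + (g a + sum_over g l)) with ((x + g a) + sum_over g l) by ring.
    apply IH; auto.
Qed.

Lemma geom_bound K H : NoDup H -> (forall n, In n H -> (n < K)%nat) ->
  sum_over (fun n => (1/2) ^ (S n)) H <= 1 - (1/2) ^ K.
Proof.
  revert H; induction K as [|K IH]; intros H Hnd Hb.
  - destruct H as [|n H]; simpl; [lra|]. specialize (Hb n (or_introl eq_refl)); lia.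
  - destruct (in_dec Nat.eq_dec K H) as [Hin|Hnin].
    + destruct (in_split _ _ Hin) as [l1 [l2 ->]].
      rewrite sum_over_app. simpl.
      assert (Hr : sum_over (fun n => (1/2)^(S n)) (l1 ++ l2) <= 1 - (1/2)^K).
      { apply IH; [eapply NoDup_remove_1; eauto|].
        intros n Hn. assert (n <> K).
        { intros ->. apply (NoDup_remove_2 _ _ _ Hnd); auto. }
        assert (n < S K)%nat by (apply Hb; apply in_app_or in Hn; apply in_or_app;
          destruct Hn; [left|right; right]; auto). lia. }
      rewrite sum_over_app in Hr. simpl. simpl in Hr. lra.
    + assert (Hr : sum_over (fun n => (1/2)^(S n)) H <= 1 - (1/2)^K).
      { apply IH; auto. intros n Hn. assert (n <> K) by (intros ->; auto).
        specialize (Hb n Hn). lia. }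
      assert ((1/2)^(S K) = 1/2 * (1/2)^K) by (simpl; ring).
      assert (0 < (1/2)^K) by (apply pow_lt; lra). lra.
Qed.

Lemma geom_sum H : NoDup H -> sum_over (fun n => (1/2) ^ (S n)) H <= 1.
Proof.
  intros Hnd.
  assert (exists K, forall n, In n H -> (n < K)%nat) as [K HK].
  { clear Hnd. induction H as [|a H [K HK]]; [exists 0%nat; intros n []|].
    exists (S (Nat.max a K)). intros n [<-|Hn]; [lia|]. specialize (HK n Hn); lia. }
  pose proof (geom_bound K H Hnd HK). assert (0 < (1/2)^K) by (apply pow_lt; lra). lra.
Qed.

Lemma cv_geom_dom (u : nat -> R) K : (forall n, 0 < u n <= K * (1/2) ^ n) -> Un_cv u 0.
Proof.
  intros Hu eps Heps.
  assert (HK : 0 <= K).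
  { specialize (Hu 0%nat). simpl in Hu. lra. }
  destruct (pow_lt_1_zero (1/2) ltac:(rewrite Rabs_right; lra) (eps / (K + 1)))
    as [N HN]; [apply Rdiv_lt_0_compat; lra|].
  exists N. intros n Hn. specialize (HN n Hn). specialize (Hu n).
  unfold R_dist. rewrite Rminus_0_r, Rabs_right by lra.
  rewrite Rabs_right in HN by (apply Rle_ge, pow_le; lra).
  assert (0 <= (1/2)^n) by (apply pow_le; lra).
  assert (Hlt : (K + 1) * (1/2)^n < eps).
  { apply (Rmult_lt_compat_l (K+1)) in HN; [|lra].
    replace ((K + 1) * (eps / (K + 1))) with eps in HN by (field; lra). lra. }
  nra.
Qed.

Lemma Jset_mono Sg A B : (forall x, A x -> B x) -> Jset_near_zero Sg A -> Jset_near_zero Sg B.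
Proof.
  intros HAB HA F HF Ht d Hd. destruct (HA F HF Ht d Hd) as [a [H [? [? [? [? Hf]]]]]].
  exists a, H. repeat split; auto.
Qed.

Lemma geom_seq Sg (HS : dense_subsemigroup Sg) eps : 0 < eps ->
  exists f, tau0 Sg f /\ forall n, f n < eps * (1/2) ^ (S n).
Proof.
  intros He. destruct HS as [Hpos [Hadd Hden]].
  assert (Hex : forall n : nat, exists s, Sg s /\ 0 < s /\ s < eps * (1/2)^(S n)).
  { intros n. assert (0 < eps * (1/2)^(S n)) by (apply Rmult_lt_0_compat; [lra|apply pow_lt; lra]).
    destruct (Hden (eps * (1/2)^(S n) / 2) (eps * (1/2)^(S n))) as [s [Hs1 [Hs2 Hs3]]]; try lra.
    exists s; split; [auto|split; lra]. }
  exists (fun n => proj1_sig (constructive_indefinite_description _ (Hex n))).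
  split; [split|].
  - intros n. destruct (constructive_indefinite_description _ (Hex n)) as [s [? ?]]; simpl; auto.
  - apply (cv_geom_dom _ eps). intros n.
    destruct (constructive_indefinite_description _ (Hex n)) as [s [? [? ?]]]; simpl.
    simpl in *. split; [auto|]. assert (0 <= (1/2)^n) by (apply pow_le; lra). nra.
  - intros n. destruct (constructive_indefinite_description _ (Hex n)) as [s [? [? ?]]]; simpl; auto.
Qed.

Section Key.
Variable fk : nat -> nat -> R.

Fixpoint ins (t : list (option nat)) (i base : nat) : R :=
  match t with
  | [] => 0
  | o :: t' => fk (match o with None => i | Some a => a end) base + ins t' i (Datatypes.S base)
  end.

Fixpoint fixp (t : list (option nat)) (base : nat) : R :=
  match t with
  | [] => 0
  | None :: t' => fixp t' (Datatypes.S base)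
  | Some a :: t' => fk a base + fixp t' (Datatypes.S base)
  end.

Fixpoint varpos (t : list (option nat)) (base : nat) : list nat :=
  match t with
  | [] => []
  | None :: t' => base :: varpos t' (Datatypes.S base)
  | Some _ :: t' => varpos t' (Datatypes.S base)
  end.

Lemma ins_decomp t i base : ins t i base = fixp t base + sum_over (fk i) (varpos t base).
Proof.
  revert base; induction t as [|[a|] t IH]; intros base; simpl; [ring| |];
  rewrite IH; ring.
Qed.

Lemma ins_sub t i j base : ins (map Some (sub t i)) j base = ins t i base.
Proof.
  revert base; induction t as [|[a|] t IH]; intros base; simpl; auto; rewrite IH; auto.
Qed.

Lemma varpos_range t base x : In x (varpos t base) -> (base <= x < base + length t)%nat.
Proof.
  revert base; induction t as [|[a|] t IH]; intros base; simpl; [intros []| |].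
  - intros H; apply IH in H; lia.
  - intros [<-|H]; [lia|apply IH in H; lia].
Qed.

Lemma varpos_NoDup t base : NoDup (varpos t base).
Proof.
  revert base; induction t as [|[a|] t IH]; intros base; simpl; [constructor|auto|].
  constructor; auto. intros H; apply varpos_range in H; lia.
Qed.

Lemma varpos_nonnil t base : In None t -> varpos t base <> [].
Proof.
  revert base; induction t as [|[a|] t IH]; intros base; simpl; [intros []| |].
  - intros [H|H]; [discriminate|apply IH; auto].
  - intros _; discriminate.
Qed.

Lemma fixp_bound t base e : 0 <= e ->
  (forall a q, In (Some a) t -> (base <= q)%nat -> 0 < fk a q < e) ->
  0 <= fixp t base <= INR (length t) * e.
Proof.
  revert base; induction t as [|[a|] t IH]; intros base He Hb; simpl length; simpl fixp.
  - simpl; lra.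
  - assert (H1 : 0 < fk a base < e) by (apply Hb; [left; auto|lia]).
    assert (H2 : 0 <= fixp t (Datatypes.S base) <= INR (length t) * e).
    { apply IH; auto. intros a' q Ha Hq. apply Hb; [right; auto|lia]. }
    rewrite S_INR. lra.
  - assert (H2 : 0 <= fixp t (Datatypes.S base) <= INR (length t) * e).
    { apply IH; auto. intros a' q Ha Hq. apply Hb; [right; auto|lia]. }
    rewrite S_INR. lra.
Qed.

Lemma fixp_S (Sg : R -> Prop) (HS : forall x y, Sg x -> Sg y -> Sg (x + y)) t base x :
  (forall a q, In (Some a) t -> Sg (fk a q)) -> Sg x -> Sg (x + fixp t base).
Proof.
  revert base x; induction t as [|[a|] t IH]; intros base x Ht Hx; simpl.
  - rewrite Rplus_0_r; auto.
  - replace (x + (fk a base + fixp t (Datatypes.S base))) with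
      ((x + fk a base) + fixp t (Datatypes.S base)) by ring.
    apply IH; [intros; apply Ht; right; auto|]. apply HS; auto. apply Ht; left; auto.
  - apply IH; auto. intros; apply Ht; right; auto.
Qed.

End Key.

Lemma NoDup_flat_map_disj (g : nat -> list nat) l : NoDup l ->
  (forall n, In n l -> NoDup (g n)) ->
  (forall n n' x, In n l -> In n' l -> n <> n' -> In x (g n) -> In x (g n') -> False) ->
  NoDup (flat_map g l).
Proof.
  induction l as [|a l IH]; simpl; intros Hnd Hg Hdis; [constructor|].
  inversion Hnd; subst. apply NoDup_app; auto.
  - apply IH; auto. intros n n' x Hn Hn' Hne; apply Hdis; auto.
  - intros x Hx Hx'. apply in_flat_map in Hx'. destruct Hx' as [n [Hn Hxn]].
    apply (Hdis a n x); auto. intros ->; auto.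
Qed.

Lemma varpos_Some (w : list nat) base : varpos (map Some w) base = [].
Proof. revert base; induction w; simpl; auto. Qed.

Lemma thr (Sg : R -> Prop) F : (forall f, In f F -> tau0 Sg f) ->
  forall e, 0 < e -> exists T, forall m, (T <= m)%nat -> forall f, In f F -> f m < e.
Proof.
  intros HF e He. induction F as [|f F IH].
  - exists 0%nat. intros m _ f [].
  - destruct IH as [T1 HT1]; [intros; apply HF; right; auto|].
    destruct (HF f (or_introl eq_refl)) as [_ Hcv].
    destruct (Hcv e He) as [T2 HT2].
    exists (Nat.max T1 T2). intros m Hm g [Heq|Hg]; [subst g|].
    + specialize (HT2 m ltac:(lia)). unfold R_dist in HT2.
      rewrite Rminus_0_r in HT2. pose proof (Rle_abs (f m)). lra.
    + apply HT1; auto; lia.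
Qed.

Fixpoint mm (T : nat -> nat) (N : nat) (n : nat) : nat :=
  match n with
  | 0 => T 0%nat
  | Datatypes.S n' => (mm T N n' + N + T (Datatypes.S n'))%nat
  end.

Lemma mm_ge T N n : (T n <= mm T N n)%nat.
Proof. destruct n; simpl; lia. Qed.

Lemma mm_sep T N n n' : (n < n')%nat -> (mm T N n + N <= mm T N n')%nat.
Proof.
  intros H. induction H; simpl; lia.
Qed.

Lemma key (Sg : R -> Prop) (HS : dense_subsemigroup Sg) (A B : R -> Prop) :
  Jset_near_zero Sg (fun x => A x \/ B x) ->
  forall F, F <> [] -> (forall f, In f F -> tau0 Sg f) -> forall delta, 0 < delta ->
  (exists a H, Sg a /\ a < delta /\ H <> [] /\ NoDup H /\
     forall f, In f F -> A (a + sum_over f H)) \/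
  (exists a H, Sg a /\ a < delta /\ H <> [] /\ NoDup H /\
     forall f, In f F -> B (a + sum_over f H)).
Proof.
  intros HJ F HFn HF delta Hd.
  destruct HS as [Hpos [Hadd Hden]].
  set (k := length F).
  assert (hk : (1 <= k)%nat) by (unfold k; destruct F; [congruence|simpl; lia]).
  set (fk := fun a => nth a F (fun _ : nat => 0)).
  assert (Hfk : forall a, (a < k)%nat -> In (fk a) F) by (intros; apply nth_In; auto).
  destruct (HJ_all k hk bool [true; false]) as [N HN].
  assert (HN1 : (1 <= N)%nat).
  { destruct (HN (fun _ => true)) as [t0 [[Ht01 [Ht02 _]] _]].
    - intros w _ _. left; auto.
    - destruct t0; [destruct Ht02|simpl in Ht01; lia]. }
  set (c0 := delta / (4 * (INR N + 1))).
  assert (Hc0 : 0 < c0).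
  { unfold c0. apply Rdiv_lt_0_compat; [lra|]. pose proof (pos_INR N); lra. }
  set (e := fun n : nat => c0 * (1/2) ^ (Datatypes.S n)).
  assert (He : forall n, 0 < e n) by (intros; unfold e; apply Rmult_lt_0_compat; [lra|apply pow_lt; lra]).
  set (T := fun n => proj1_sig (constructive_indefinite_description _ (thr Sg F HF (e n) (He n)))).
  assert (HT : forall n m, (T n <= m)%nat -> forall f, In f F -> f m < e n).
  { intros n. unfold T. destruct (constructive_indefinite_description _ _) as [Tn HTn]. simpl. auto. }
  set (m := mm T N).
  assert (Hbd : forall n a q, (a < k)%nat -> (m n <= q)%nat -> 0 < fk a q < e n).
  { intros n a q Ha Hq. split.
    - apply Hpos. destruct (HF (fk a) (Hfk a Ha)) as [HS1 _]. apply HS1.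
    - apply (HT n); [|apply Hfk; auto]. pose proof (mm_ge T N n). unfold m in Hq. lia. }
  assert (HSfk : forall a q, (a < k)%nat -> Sg (fk a q)).
  { intros a q Ha. destruct (HF (fk a) (Hfk a Ha)) as [HS1 _]. apply HS1. }
  set (g := fun (w : list nat) n => ins fk (map Some w) 0 (m n)).
  assert (Hgfix : forall w n, g w n = fixp fk (map Some w) (m n)).
  { intros w n. unfold g. rewrite ins_decomp, varpos_Some; simpl; ring. }
  assert (Hgb : forall w n, In w (words k N) -> Sg (g w n) /\ 0 < g w n <= INR N * e n).
  { intros w n Hw. apply words_spec2 in Hw. destruct Hw as [Hwl Hwa].
    destruct w as [|b w]; [simpl in Hwl; lia|].
    assert (Hb : (b < k)%nat) by (apply Hwa; left; auto).
    assert (Hsg : Sg (g (b :: w) n)).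
    { unfold g. simpl. rewrite ins_decomp, varpos_Some. simpl. rewrite Rplus_0_r.
      apply (fixp_S fk Sg Hadd); [|apply HSfk; auto].
      intros a q Ha. apply HSfk. apply in_map_iff in Ha. destruct Ha as [x [Hx Hx']].
      injection Hx; intros <-. apply Hwa; right; auto. }
    split; [auto|split; [apply Hpos; auto|]].
    rewrite Hgfix. rewrite <- Hwl. rewrite <- (length_map Some).
    apply fixp_bound; [apply Rlt_le, He|].
    intros a q Ha Hq. apply Hbd; auto. apply in_map_iff in Ha. destruct Ha as [x [Hx Hx']].
    injection Hx; intros <-. apply Hwa; auto. }
  set (G := map g (words k N)).
  assert (HG : G <> []).
  { unfold G. assert (Hr : In (repeat 0%nat N) (words k N)).
    { apply words_spec; [apply repeat_length|]. intros a Ha. apply repeat_spec in Ha. lia. }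
    destruct (words k N); [destruct Hr|discriminate]. }
  assert (HGt : forall f, In f G -> tau0 Sg f).
  { intros f Hf. unfold G in Hf. apply in_map_iff in Hf. destruct Hf as [w [<- Hw]].
    split; [intros n; apply Hgb; auto|].
    apply (cv_geom_dom _ (INR N * c0)). intros n. destruct (Hgb w n Hw) as [_ [H1 H2]].
    split; auto. unfold e in H2. simpl in H2. assert (0 <= (1/2)^n) by (apply pow_le; lra).
    pose proof (pos_INR N). nra. }
  destruct (HJ G HG HGt (delta/2) ltac:(lra)) as [a [H [Ha [Had [HHn [HHnd HAB]]]]]].
  set (col := fun w => if excluded_middle_informative (A (a + sum_over (g w) H)) then true else false).
  destruct (HN col) as [t [[Htl [HtN Htk]] Hteq]].
  { intros w _ _. unfold col. destruct (excluded_middle_informative _); simpl; auto. }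
  set (a' := a + sum_over (fun n => fixp fk t (m n)) H).
  set (H' := flat_map (fun n => varpos t (m n)) H).
  assert (Hval : forall i, a + sum_over (g (sub t i)) H = a' + sum_over (fk i) H').
  { intros i. unfold a', H'. rewrite sum_over_flat_map.
    rewrite (sum_over_ext (g (sub t i)) (fun n => fixp fk t (m n) + sum_over (fk i) (varpos t (m n)))).
    - rewrite sum_over_plus. ring.
    - intros n. unfold g. rewrite ins_sub, ins_decomp. auto. }
  assert (Ha'S : Sg a').
  { unfold a'. clear -Ha Hadd HSfk Htk. revert a Ha. induction H as [|n0 H IH]; intros x Hx; simpl.
    - rewrite Rplus_0_r; auto.
    - replace (x + (fixp fk t (m n0) + sum_over (fun n => fixp fk t (m n)) H)) with
        ((x + fixp fk t (m n0)) + sum_over (fun n => fixp fk t (m n)) H) by ring.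
      apply IH. apply (fixp_S fk Sg Hadd); auto. }
  assert (Ha'd : a' < delta).
  { unfold a'.
    assert (Hs : sum_over (fun n => fixp fk t (m n)) H <= INR N * c0).
    { apply Rle_trans with (sum_over (fun n => INR N * c0 * (1/2)^(Datatypes.S n)) H).
      - apply sum_over_le. intros n _. rewrite <- Htl.
        replace (INR (length t) * c0 * (1/2)^(Datatypes.S n)) with (INR (length t) * e n)
          by (unfold e; ring).
        apply fixp_bound; [apply Rlt_le, He|]. intros a0 q Ha0 Hq. apply Hbd; auto.
      - rewrite sum_over_scal. pose proof (geom_sum H HHnd).
        assert (0 <= INR N * c0) by (pose proof (pos_INR N); nra). nra. }
    assert (Hc : INR N * c0 <= delta / 4).
    { unfold c0. pose proof (pos_INR N).
      replace (INR N * (delta / (4 * (INR N + 1)))) with ((delta / 4) * (INR N / (INR N + 1)))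
        by (field; lra).
      assert (INR N / (INR N + 1) <= 1).
      { apply Rmult_le_reg_r with (INR N + 1); [lra|].
        unfold Rdiv. rewrite Rmult_assoc, Rinv_l by lra. lra. }
      nra. }
    lra. }
  assert (HH'n : H' <> []).
  { unfold H'. destruct H as [|n0 H]; [congruence|]. simpl.
    pose proof (varpos_nonnil t (m n0) HtN).
    destruct (varpos t (m n0)); [congruence|discriminate]. }
  assert (HH'nd : NoDup H').
  { unfold H'. apply NoDup_flat_map_disj; auto.
    - intros; apply varpos_NoDup.
    - intros n n' x _ _ Hne Hx Hx'. apply varpos_range in Hx. apply varpos_range in Hx'.
      destruct (Nat.lt_gt_cases n n') as [[Hlt|Hlt] _]; [auto| |].
      + pose proof (mm_sep T N n n' Hlt). unfold m in *. lia.
      + pose proof (mm_sep T N n' n Hlt). unfold m in *. lia. }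
  assert (HinG : forall i, (i < k)%nat -> In (g (sub t i)) G).
  { intros i Hi. unfold G. apply in_map. apply sub_words; [split; auto|auto]. }
  assert (HFi : forall f, In f F -> exists i, (i < k)%nat /\ f = fk i).
  { intros f Hf. destruct (In_nth F f (fun _ => 0) Hf) as [i [Hi Hi']]. exists i; split; auto. }
  destruct (Bool.bool_dec (col (sub t 0)) true) as [Hc|Hc].
  - left. exists a', H'. repeat split; auto.
    intros f Hf. destruct (HFi f Hf) as [i [Hi ->]]. rewrite <- Hval.
    assert (Hci : col (sub t i) = true) by (rewrite (Hteq i 0%nat); auto; lia).
    unfold col in Hci. destruct (excluded_middle_informative _); [auto|discriminate].
  - right. exists a', H'. repeat split; auto.
    intros f Hf. destruct (HFi f Hf) as [i [Hi ->]]. rewrite <- Hval.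
    assert (Hci : col (sub t i) <> true) by (rewrite (Hteq i 0%nat); auto; lia).
    unfold col in Hci. destruct (excluded_middle_informative _) as [|HnA]; [congruence|].
    destruct (HAB _ (HinG i Hi)); [contradiction|auto].
Qed.

Lemma not_J_ex Sg A : ~ Jset_near_zero Sg A ->
  exists F delta, F <> [] /\ (forall f, In f F -> tau0 Sg f) /\ 0 < delta /\
   forall a H, Sg a -> a < delta -> H <> [] -> NoDup H -> exists f, In f F /\ ~ A (a + sum_over f H).
Proof.
  intros Hn. apply NNPP; intros Hc. apply Hn. intros F HF Ht delta Hd.
  apply NNPP; intros Hc2. apply Hc. exists F, delta. split; [auto|split; [auto|split; [auto|]]].
  intros a0 HL Ha Had HH HHnd. apply NNPP; intros Hc3. apply Hc2. exists a0, HL.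
  repeat split; auto. intros f Hf. apply NNPP; intros Hc4. apply Hc3. exists f; auto.
Qed.

Lemma Jset_union Sg (HS : dense_subsemigroup Sg) A B :
  Jset_near_zero Sg (fun x => A x \/ B x) -> Jset_near_zero Sg A \/ Jset_near_zero Sg B.
Proof.
  intros HJ. destruct (classic (Jset_near_zero Sg B)) as [|HnB]; [right; auto|left].
  destruct (not_J_ex _ _ HnB) as [F2 [d2 [HF2 [Ht2 [Hd2 Hno2]]]]].
  intros F1 HF1 Ht1 d1 Hd1.
  destruct (key Sg HS A B HJ (F1 ++ F2)) with (delta := Rmin d1 d2)
    as [[a [H [Ha [Had [HH [HHnd Hf]]]]]]|[a [H [Ha [Had [HH [HHnd Hf]]]]]]].
  - destruct F1; [congruence|discriminate].
  - intros f Hf0. apply in_app_or in Hf0. destruct Hf0; auto.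
  - apply Rmin_pos; auto.
  - exists a, H. repeat split; auto.
    + pose proof (Rmin_l d1 d2); lra.
    + intros f Hf0. apply Hf. apply in_or_app; auto.
  - exfalso. destruct (Hno2 a H Ha) as [f [Hf0 Hnf]]; auto.
    + pose proof (Rmin_r d1 d2); lra.
    + apply Hnf, Hf. apply in_or_app; auto.
Qed.

Lemma empty_not_J Sg (HS : dense_subsemigroup Sg) A : (forall x, ~ A x) -> ~ Jset_near_zero Sg A.
Proof.
  intros HA HJ. destruct (geom_seq Sg HS 1 ltac:(lra)) as [f [Hf _]].
  destruct (HJ [f] ltac:(discriminate) ltac:(intros g [<-|[]]; auto) 1 ltac:(lra))
    as [a [H [_ [_ [_ [_ Hx]]]]]].
  apply (HA _ (Hx f (or_introl eq_refl))).
Qed.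

Lemma S_J Sg (HS : dense_subsemigroup Sg) : Jset_near_zero Sg Sg.
Proof.
  destruct HS as [Hpos [Hadd Hden]].
  intros F HF Ht d Hd. destruct (Hden (d/2) d) as [a [Ha [Ha1 Ha2]]]; try lra.
  exists a, [0%nat]. repeat split; auto.
  - discriminate.
  - constructor; [intros []|constructor].
  - intros f Hf. simpl. rewrite Rplus_0_r. apply Hadd; auto. apply (Ht f Hf).
Qed.

Lemma small_K Sg (HS : dense_subsemigroup Sg) eps : 0 < eps -> Kfam Sg (fun x => Sg x /\ x < eps).
Proof.
  intros He. split; [intros x []; auto|]. intros HJ.
  destruct (geom_seq Sg HS (eps/2) ltac:(lra)) as [f [Hf Hfb]].
  destruct (HJ [f] ltac:(discriminate) ltac:(intros g [<-|[]]; auto) (eps/2) ltac:(lra))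
    as [a [H [Ha [Had [_ [HHnd Hx]]]]]].
  destruct (Hx f (or_introl eq_refl)) as [HS1 HS2]. apply HS2. split; auto.
  assert (sum_over f H <= eps/2).
  { apply Rle_trans with (sum_over (fun n => eps/2 * (1/2)^(Datatypes.S n)) H).
    - apply sum_over_le. intros n _. apply Rlt_le, Hfb.
    - rewrite sum_over_scal. pose proof (geom_sum H HHnd). nra. }
  lra.
Qed.

Section UF.
Variable Sg : R -> Prop.
Variable p : (R -> Prop) -> Prop.
Hypothesis Hu : ultrafilter Sg p.

Lemma uf_sub A : p A -> subsetR A Sg.
Proof. destruct Hu as [H _]; auto. Qed.

Lemma uf_up A B : p A -> (forall x, A x -> B x) -> subsetR B Sg -> p B.
Proof. destruct Hu as [_ [_ [_ [_ [H _]]]]]; intros; eapply H; eauto. Qed.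

Lemma uf_I A B : p A -> p B -> p (fun x => A x /\ B x).
Proof. destruct Hu as [_ [_ [_ [H _]]]]; auto. Qed.

Lemma uf_S : p Sg.
Proof. destruct Hu as [_ [H _]]; auto. Qed.

Lemma uf_0 : ~ p (fun _ => False).
Proof. destruct Hu as [_ [_ [H _]]]; auto. Qed.

Lemma uf_M A : subsetR A Sg -> p A \/ p (fun x => Sg x /\ ~ A x).
Proof. destruct Hu as [_ [_ [_ [_ [_ H]]]]]; auto. Qed.

Lemma uf_both A : p A -> p (fun x => Sg x /\ ~ A x) -> False.
Proof.
  intros H1 H2. apply uf_0. apply (uf_up _ _ (uf_I _ _ H1 H2)).
  - intros x [Ha [_ Hna]]; auto.
  - intros x [].
Qed.

Lemma uf_list {Y} (C : R -> Prop) (Q : Y -> R -> Prop) (L : list Y) :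
  p C -> (forall y, In y L -> p (Q y)) -> p (fun x => C x /\ forall y, In y L -> Q y x).
Proof.
  intros HC. induction L as [|y0 L IH]; intros HQ.
  - apply (uf_up _ _ HC); [intros x Hx; split; [auto|intros y []]|].
    intros x [Hx _]; apply (uf_sub _ HC); auto.
  - apply (uf_up _ _ (uf_I _ _ (HQ y0 (or_introl eq_refl)) (IH (fun y Hy => HQ y (or_intror Hy))))).
    + intros x [Hq [Hc Hall]]. split; auto. intros y [<-|Hy]; auto.
    + intros x [Hx _]; apply (uf_sub _ HC); auto.
Qed.
End UF.

Lemma K_filter Sg (HS : dense_subsemigroup Sg) : filter_on Sg (Kfam Sg).
Proof.
  split; [intros A []; auto|].
  split; [split; [intros x; auto|apply empty_not_J; auto; intros x []; auto]|].
  split; [intros [_ Hn]; apply Hn; apply (Jset_mono Sg Sg); [intros x Hx; split; auto|apply S_J; auto]|].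
  split.
  - intros A B [HA1 HA2] [HB1 HB2]. split; [intros x [Hx _]; auto|].
    intros HJ. apply (Jset_mono _ _ (fun x => (Sg x /\ ~ A x) \/ (Sg x /\ ~ B x))) in HJ.
    + destruct (Jset_union Sg HS _ _ HJ); auto.
    + intros x [Hx Hn]. destruct (classic (A x)); [right|left]; split; auto.
  - intros A B [HA1 HA2] HAB HBS. split; auto. intros HJ. apply HA2.
    apply (Jset_mono _ _ _ (fun x H => match H with conj a b => conj a (fun h => b (HAB x h)) end) HJ).
Qed.

Lemma J0_iff Sg (HS : dense_subsemigroup Sg) p : J0 Sg p <-> Kbar Sg (Kfam Sg) p.
Proof.
  split.
  - intros [[Hu Hsm] HJ]. split; auto. intros A [HAS HnJ].
    destruct (uf_M Sg p Hu A HAS) as [|Hc]; auto. exfalso. apply HnJ. apply HJ; auto.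
  - intros [Hu HK]. split; [split; auto|].
    + intros eps He. apply HK, small_K; auto.
    + intros A HA. apply NNPP; intros HnJ.
      assert (HK' : Kfam Sg (fun x => Sg x /\ ~ A x)).
      { split; [intros x []; auto|]. intros HJ'. apply HnJ.
        apply (Jset_mono _ _ _ (fun x H => match H with conj a b => NNPP _ (fun c => b (conj a c)) end) HJ'). }
      apply (uf_both Sg p Hu A HA (HK _ HK')).
Qed.

Lemma add_ultra Sg (HS : dense_subsemigroup Sg) p q :
  ultrafilter Sg p -> ultrafilter Sg q -> ultrafilter Sg (ult_add Sg p q).
Proof.
  intros Hp Hq. destruct HS as [Hpos [Hadd Hden]].
  set (Hat := fun A x => Sg x /\ q (fun y => Sg y /\ A (x + y))).
  assert (HatS : forall A, subsetR (Hat A) Sg) by (intros A x []; auto).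
  split; [intros A []; auto|].
  split.
  { split; [intros x; auto|]. apply (uf_up Sg p Hp _ _ (uf_S Sg p Hp)); [|intros x0 []; auto].
    intros x Hx. split; auto. apply (uf_up Sg q Hq _ _ (uf_S Sg q Hq)); [|intros y []; auto].
    intros y Hy; split; auto. }
  split.
  { intros [_ Hp0]. apply (uf_0 Sg p Hp). apply (uf_up Sg p Hp _ _ Hp0); [|intros x []].
    intros x [Hx Hq0]. apply (uf_0 Sg q Hq). apply (uf_up Sg q Hq _ _ Hq0); [|intros y []].
    intros y [_ []]. }
  split.
  { intros A B [HA pA] [HB pB]. split; [intros x [Hx _]; auto|].
    apply (uf_up Sg p Hp _ _ (uf_I Sg p Hp _ _ pA pB)); [|intros x0 []; auto].
    intros x [[Hx qA] [_ qB]]. split; auto.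
    apply (uf_up Sg q Hq _ _ (uf_I Sg q Hq _ _ qA qB)); [|intros y []; auto].
    intros y [[Hy Ay] [_ By]]. split; auto. }
  split.
  { intros A B [HA pA] HAB HBS. split; auto.
    apply (uf_up Sg p Hp _ _ pA); [|intros x0 []; auto].
    intros x [Hx qA]. split; auto. apply (uf_up Sg q Hq _ _ qA); [|intros y []; auto].
    intros y [Hy Ay]; split; auto. }
  intros A HAS. destruct (uf_M Sg p Hp (Hat A) (HatS A)) as [H1|H2].
  - left. split; auto.
  - right. split; [intros x []; auto|].
    apply (uf_up Sg p Hp _ _ H2); [|intros x0 []; auto].
    intros x [Hx Hn]. split; auto.
    destruct (uf_M Sg q Hq (fun y => Sg y /\ A (x + y))) as [Hq1|Hq2]; [intros y []; auto| |].
    + exfalso; apply Hn; split; auto.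
    + apply (uf_up Sg q Hq _ _ Hq2); [|intros y []; auto].
      intros y [Hy Hny]. split; [auto|]. split; [apply Hadd; auto|]. intros HA'. apply Hny; auto.
Qed.

Lemma sum_over_map f g l : sum_over f (map g l) = sum_over (fun n => f (g n)) l.
Proof. induction l; simpl; [auto|rewrite IHl; auto]. Qed.

Lemma in_le_max x l : In x l -> (x <= list_max l)%nat.
Proof.
  intros H. assert (Hf : Forall (fun k => (k <= list_max l)%nat) l) by (apply list_max_le; lia).
  rewrite Forall_forall in Hf. auto.
Qed.

Lemma NoDup_map_add M l : NoDup l -> NoDup (map (fun n => (n + M)%nat) l).
Proof.
  induction l; simpl; intros H; [constructor|]. inversion H; subst. constructor; auto.
  intros Hin. apply in_map_iff in Hin. destruct Hin as [x [Hx Hx']].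
  assert (x = a) by lia. subst; auto.
Qed.

Lemma add_J0 Sg (HS : dense_subsemigroup Sg) p q : J0 Sg p -> J0 Sg q -> J0 Sg (ult_add Sg p q).
Proof.
  intros [[Hp Hsp] HJp] [[Hq Hsq] HJq].
  pose proof HS as HS'. destruct HS' as [Hpos [Hadd Hden]].
  split; [split; [apply add_ultra; auto|]|].
  - intros eps He. split; [intros x []; auto|].
    apply (uf_up Sg p Hp _ _ (Hsp (eps/2) ltac:(lra))); [|intros x []; auto].
    intros x [Hx Hxe]. split; auto.
    apply (uf_up Sg q Hq _ _ (Hsq (eps/2) ltac:(lra))); [|intros y []; auto].
    intros y [Hy Hye]. split; auto. split; [apply Hadd; auto|lra].
  - intros A [HAS pA] F HF Ht delta Hd.
    destruct (HJp _ pA F HF Ht (delta/2) ltac:(lra)) as [a [H [Ha [Had [HH [HHnd Hx]]]]]].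
    set (Cint := fun y => Sg y /\ forall f, In f F -> Sg y /\ A (a + sum_over f H + y)).
    assert (qC : q Cint).
    { apply (uf_list Sg q Hq Sg (fun f y => Sg y /\ A (a + sum_over f H + y)) F (uf_S Sg q Hq)).
      intros f Hf. destruct (Hx f Hf) as [_ Hqf]. exact Hqf. }
    set (M := Datatypes.S (list_max H)).
    set (F' := map (fun f n => f (n + M)%nat) F).
    destruct (HJq _ qC F') with (delta := delta/2) as [b [H2 [Hb [Hbd [HH2 [HH2nd Hy]]]]]].
    + unfold F'. destruct F; [congruence|discriminate].
    + intros f' Hf'. unfold F' in Hf'. apply in_map_iff in Hf'. destruct Hf' as [f [<- Hf]].
      destruct (Ht f Hf) as [HtS Hcv]. split; [intros n; apply HtS|].
      intros eps He. destruct (Hcv eps He) as [N0 HN0]. exists N0. intros n Hn. apply HN0. lia.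
    + lra.
    + exists (a + b), (H ++ map (fun n => (n + M)%nat) H2).
      split; [apply Hadd; auto|]. split; [lra|]. split.
      { destruct H; [congruence|discriminate]. }
      split.
      { apply NoDup_app; auto; [apply NoDup_map_add; auto|].
        intros x Hx1 Hx2. apply in_map_iff in Hx2. destruct Hx2 as [y [<- _]].
        pose proof (in_le_max _ _ Hx1). unfold M in *. lia. }
      intros f Hf. assert (Hf' : In (fun n => f (n + M)%nat) F') by (unfold F'; apply (in_map (fun f n => f (n + M)%nat)); auto).
      destruct (Hy _ Hf') as [_ Hall]. destruct (Hall f Hf) as [_ HA].
      rewrite sum_over_app, sum_over_map.
      replace (a + b + (sum_over f H + sum_over (fun n => f (n + M)%nat) H2)) with
        (a + sum_over f H + (b + sum_over (fun n => f (n + M)%nat) H2)) by ring.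
      exact HA.
Qed.

Lemma compact_J0 Sg (HS : dense_subsemigroup Sg) : bS_compact Sg (J0 Sg).
Proof.
  intros I U HUo Hcov.
  destruct (classic (exists l : list I, forall p, J0 Sg p -> exists i, In i l /\ U i p)) as [|Hno]; auto.
  exfalso.
  set (good := fun ia : I * (R -> Prop) => subsetR (snd ia) Sg /\
                forall q, ultrafilter Sg q -> q (snd ia) -> U (fst ia) q).
  set (G := fun D => subsetR D Sg /\ exists C l, Kfam Sg C /\ (forall ia, In ia l -> good ia) /\
               forall x, C x -> (forall ia, In ia l -> Sg x /\ ~ snd ia x) -> D x).
  pose proof (K_filter Sg HS) as [KS [KSS [K0 [KI KU]]]].
  assert (HG : filter_on Sg G).
  { split; [intros D []; auto|].
    split; [split; [intros x; auto|exists Sg, []; split; [auto|split; [intros ia []|auto]]]|].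
    split.
    { intros [_ [C [l [HC [Hgood Hx]]]]].
      assert (Hp : exists p, J0 Sg p /\ forall i, In i (map fst l) -> ~ U i p).
      { apply NNPP; intros Hc. apply Hno. exists (map fst l). intros p Hp0.
        apply NNPP; intros Hc2. apply Hc. exists p. split; auto. intros i Hi HU.
        apply Hc2. exists i; auto. }
      destruct Hp as [p [Hp0 HpU]].
      pose proof ((proj1 (J0_iff Sg HS p)) Hp0) as [Hu HK].
      assert (Hl : forall ia, In ia l -> p (fun x => Sg x /\ ~ snd ia x)).
      { intros ia Hia. destruct (Hgood ia Hia) as [Hs Hb].
        destruct (uf_M Sg p Hu (snd ia) Hs) as [H1|H2]; auto.
        exfalso. apply (HpU (fst ia)); [apply in_map; auto|]. apply Hb; auto. }
      pose proof (uf_list Sg p Hu C (fun ia x => Sg x /\ ~ snd ia x) l (HK C HC) Hl) as Hpl.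
      apply (uf_0 Sg p Hu). apply (uf_up Sg p Hu _ _ Hpl); [|intros x []].
      intros x [HCx Hall]. apply (Hx x HCx Hall). }
    split.
    { intros A B [HA [C1 [l1 [HC1 [Hg1 Hx1]]]]] [HB [C2 [l2 [HC2 [Hg2 Hx2]]]]].
      split; [intros x [Hx _]; auto|].
      exists (fun x => C1 x /\ C2 x), (l1 ++ l2). split; [apply KI; auto|]. split.
      - intros ia Hia. apply in_app_or in Hia. destruct Hia; auto.
      - intros x [Hc1 Hc2] Hall. split.
        + apply Hx1; auto. intros ia Hia; apply Hall, in_or_app; auto.
        + apply Hx2; auto. intros ia Hia; apply Hall, in_or_app; auto. }
    intros A B [HA [C [l [HC [Hg Hx]]]]] HAB HBS. split; auto.
    exists C, l. split; [auto|]. split; [auto|]. intros x Hc Hall. apply HAB; auto. }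
  destruct (UFM.uf_extend Sg G HG) as [q [Hq HGq]].
  assert (HqJ : J0 Sg q).
  { apply (proj2 (J0_iff Sg HS q)). split; auto. intros C HC. apply HGq. split; [apply KS; auto|].
    exists C, []. split; auto. split; [intros ia []|auto]. }
  destruct (Hcov q HqJ) as [i Hi].
  destruct (HUo i q Hi) as [A [HqA Hb]].
  assert (HgA : good (i, A)) by (split; [apply (uf_sub Sg q Hq); auto|exact Hb]).
  assert (HGA : G (fun x => Sg x /\ ~ A x)).
  { split; [intros x []; auto|]. exists Sg, [(i, A)]. split; [auto|]. split.
    - intros ia [<-|[]]; auto.
    - intros x Hx Hall. apply (Hall (i, A)); left; auto. }
  apply (uf_both Sg q Hq A HqA (HGq _ HGA)).
Qed.

Theorem lemma4p6 (S : R -> Prop) (HS : dense_subsemigroup S) :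
  filter_on S (Kfam S) /\
  (forall p, J0 S p <-> Kbar S (Kfam S) p) /\
  bS_compact S (J0 S) /\ bS_subsemigroup S (J0 S).
Proof.
  split; [apply K_filter; auto|].
  split; [intros p; apply J0_iff; auto|].
  split; [apply compact_J0; auto|].
  split; [intros p [[Hu _] _]; auto|].
  split.
  - destruct (UFM.uf_extend S (Kfam S) (K_filter S HS)) as [p [Hp HK]].
    exists p. apply (proj2 (J0_iff S HS p)). split; auto.
  - intros p q Hp Hq. apply add_J0; auto.
Qed.
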